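(* For every integer $n\ge 3$, the crown graph of order $2n$ admits an optimal extended irregular dominating set.
   Context: For $n\ge3$, the crown graph of order $2n$ is $K_{n,n}$ with parts $\{a_1,\dots,a_n\}$, $\{b_1,\dots,b_n\}$ minus the perfect matching $\{\{a_i,b_i\}: 1\le i\le n\}$. In a finite simple graph $\Gamma=(V,E)$ with distance $d$, a vertex $v$ carrying a non-negative integer label $\ell$ dominates (covers) exactly the vertices $u$ with $d(u,v)=\ell$; a vertex labeled $0$ dominates only itself. For $k\ge 0$, a $k$-extended irregular dominating set is a set $S\subseteq V$ of $k$ vertices with a labeling $\lambda:S\to\mathbb{Z}_{\ge0}$ with distinct labels, such that every vertex of $V$ is dominated by some vertex of $S$; it is assumed that some vertex of $S$ has label $0$. $\gamma_e(\Gamma)$ is the minimum cardinality of such a set, and a $k$-extended irregular dominating set is optimal if $k=\gamma_e(\Gamma)$. *)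

(* Defs.v *)
From mathcomp Require Import all_boot.
Set Implicit Arguments. Unset Strict Implicit. Unset Printing Implicit Defensive.

Definition walk_len (T : finType) (e : rel T) (u v : T) (k : nat) : Prop :=
  exists p : seq T, [/\ size p = k, path e u p & last u p = v].

Definition dist_eq (T : finType) (e : rel T) (u v : T) (l : nat) : Prop :=
  walk_len e u v l /\ forall m, m < l -> ~ walk_len e u v m.

Definition dominates (T : finType) (e : rel T) (v : T) (l : nat) (u : T) : Prop :=
  dist_eq e u v l.

Definition ext_irr_dom (T : finType) (e : rel T) (S : {set T}) (lam : T -> nat) : Prop :=
  [/\ {in S &, injective lam},
      exists2 v, v \in S & lam v = 0
    & forall u : T, exists2 v, v \in S & dominates e v (lam v) u].

Definition optimal_ext_irr_dom (T : finType) (e : rel T) (S : {set T}) (lam : T -> nat) : Prop :=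
  ext_irr_dom e S lam /\
  forall (S' : {set T}) (lam' : T -> nat), ext_irr_dom e S' lam' -> #|S| <= #|S'|.

(* Crown graph of order 2n: vertices inl i = a_i, inr j = b_j;
   a_i ~ b_j iff i <> j. *)
Definition crown_vertex (n : nat) : finType := ('I_n + 'I_n)%type.

Definition crown_adj (n : nat) : rel (crown_vertex n) :=
  fun x y => match x, y with
             | inl i, inr j => i != j
             | inr j, inl i => i != j
             | _, _ => false
             end.

(* Main.v *)
Require Import Defs.
From mathcomp Require Import all_boot zify.
Set Implicit Arguments. Unset Strict Implicit. Unset Printing Implicit Defensive.

Section Crown.
Variable n : nat.
Hypothesis n3 : 3 <= n.
Local Notation T := (crown_vertex n).
Local Notation e := (@crown_adj n).

Definition cd (x y : T) : nat :=
  match x, y with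
  | inl i, inl j | inr i, inr j => if i == j then 0 else 2
  | inl i, inr j | inr i, inl j => if i == j then 3 else 1
  end.

Lemma third (i j : 'I_n) : exists k : 'I_n, (k != i) && (k != j).
Proof.
have : 0 < #|~: [set i; j]|.
  rewrite cardsCs setCK card_ord.
  have := cards2 i j; have := leq_b1 (i != j); lia.
rewrite card_gt0 => /set0Pn [k]; rewrite !inE negb_or => Hk; by exists k.
Qed.

Lemma cd_le3 u v : cd u v <= 3.
Proof. by case: u v => i [] j /=; case: (i == j). Qed.

Lemma walk_cd u v : walk_len e u v (cd u v).
Proof.
case: u v => i [] j /=.
- case: eqP => [->|/eqP ij]; first by exists [::].
  have [k /andP [ki kj]] := third i j.
  exists [:: inr k; inl j]; split => //=; rewrite ?andbT; repeat (apply/andP; split); by rewrite // eq_sym.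
- case: eqP => [->|/eqP ij].
  + have [k /andP [ki _]] := third j j.
    have [m /andP [mj mk]] := third j k.
    exists [:: inr k; inl m; inr j]; split => //=; rewrite ?andbT; repeat (apply/andP; split); by rewrite // eq_sym.
  + by exists [:: inr j]; split => //=; rewrite ij.
- case: eqP => [->|/eqP ij].
  + have [k /andP [ki _]] := third j j.
    have [m /andP [mj mk]] := third j k.
    exists [:: inl k; inr m; inl j]; split => //=; rewrite ?andbT; repeat (apply/andP; split); by rewrite // eq_sym.
  + by exists [:: inl j]; split => //=; rewrite eq_sym ij.
- case: eqP => [->|/eqP ij]; first by exists [::].
  have [k /andP [ki kj]] := third i j.
  exists [:: inl k; inr j]; split => //=; rewrite ?andbT; repeat (apply/andP; split); by rewrite // eq_sym.
Qed.

Lemma walk_ge u v m : walk_len e u v m -> cd u v <= m.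
Proof.
case=> p [<- Hp <-].
case: p Hp => [|x [|y [|z p]]] /=.
- by case: u => i /=; rewrite eqxx.
- rewrite andbT; case: u x => i [] j //= Hij.
  + by rewrite (negbTE Hij).
  + by rewrite eq_sym (negbTE Hij).
- rewrite andbT; case: u x y => i [] j [] k //= /andP [] // _ _; by case: ifP.
- move=> _; exact: leq_trans (cd_le3 _ _) _.
Qed.

Lemma dist_cd u v l : dist_eq e u v l <-> cd u v = l.
Proof.
split.
- case=> W N; apply/eqP; rewrite eqn_leq walk_ge //=.
  rewrite leqNgt; apply/negP => H; exact: (N _ H (walk_cd u v)).
- move=> <-; split; first exact: walk_cd.
  move=> m Hm W; have := walk_ge W; lia.
Qed.

Lemma sum_bool (P : pred T) : \sum_(u : T) (P u : nat) = #|[set u | P u]|.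
Proof.
rewrite -sum1dep_card [in RHS]big_mkcond /=; apply: eq_bigr => u _; by case: (P u).
Qed.

Lemma card_D v l : \sum_(u : T) (cd u v == l : nat) <= (n - 2) * (l \in [:: 1; 2]) + 1.
Proof.
rewrite sum_bool.
case: (boolP (l \in [:: 1; 2])) => Hl.
- rewrite muln1.
  have -> : n - 2 + 1 = n.-1 by lia.
  rewrite !inE in Hl.
  case: v => i.
  + case/orP: Hl => /eqP ->.
    * apply: (leq_trans (subset_leq_card (_ : _ \subset inr @: [set~ i]))).
        apply/subsetP => -[] j; rewrite !inE /=; case: (j =P i) => [->|/eqP ji]; rewrite ?eqxx ?(negbTE ji) //= => _;
        apply/imsetP; exists j => //; by rewrite !inE.
      by rewrite (leq_trans (leq_imset_card _ _)) // cardsC1 card_ord.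
    * apply: (leq_trans (subset_leq_card (_ : _ \subset inl @: [set~ i]))).
        apply/subsetP => -[] j; rewrite !inE /=; case: (j =P i) => [->|/eqP ji]; rewrite ?eqxx ?(negbTE ji) //= => _;
        apply/imsetP; exists j => //; by rewrite !inE.
      by rewrite (leq_trans (leq_imset_card _ _)) // cardsC1 card_ord.
  + case/orP: Hl => /eqP ->.
    * apply: (leq_trans (subset_leq_card (_ : _ \subset inl @: [set~ i]))).
        apply/subsetP => -[] j; rewrite !inE /=; case: (j =P i) => [->|/eqP ji]; rewrite ?eqxx ?(negbTE ji) //= => _;
        apply/imsetP; exists j => //; by rewrite !inE.
      by rewrite (leq_trans (leq_imset_card _ _)) // cardsC1 card_ord.
    * apply: (leq_trans (subset_leq_card (_ : _ \subset inr @: [set~ i]))).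
        apply/subsetP => -[] j; rewrite !inE /=; case: (j =P i) => [->|/eqP ji]; rewrite ?eqxx ?(negbTE ji) //= => _;
        apply/imsetP; exists j => //; by rewrite !inE.
      by rewrite (leq_trans (leq_imset_card _ _)) // cardsC1 card_ord.
- rewrite muln0 add0n.
  pose w : T := if l == 0 then v else (match v with inl i => inr i | inr i => inl i end).
  rewrite (leq_trans (subset_leq_card (_ : _ \subset [set w]))) ?cards1 //.
  apply/subsetP => u; rewrite !inE /w => /eqP E; subst l.
  clear w; move: Hl; rewrite !inE.
  case: u v => i [] j /=; case: (i =P j) => [->|/eqP ij]; rewrite ?eqxx ?(negbTE ij) //=.
Qed.


Lemma lower (S' : {set T}) (lam : T -> nat) : ext_irr_dom e S' lam -> 4 <= #|S'|.
Proof.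
case=> inj _ cov.
have H1 : 2 * n <= \sum_(v in S') \sum_(u : T) (cd u v == lam v : nat).
  rewrite exchange_big /=.
  have -> : 2 * n = \sum_(u : T) 1 by rewrite sum1_card card_sum card_ord; lia.
  apply: leq_sum => u _.
  have [v vS /dist_cd Hv] := cov u.
  by rewrite (bigD1 v) //= Hv eqxx leq_addr.
have H2 : \sum_(v in S') \sum_(u : T) (cd u v == lam v : nat)
     <= \sum_(v in S') ((n - 2) * (lam v \in [:: 1; 2]) + 1).
  by apply: leq_sum => v _; exact: card_D.
have H3 : \sum_(v in S') ((n - 2) * (lam v \in [:: 1; 2]) + 1)
     = (n - 2) * \sum_(v in S') (lam v \in [:: 1; 2] : nat) + #|S'|.
  by rewrite big_split /= -big_distrr sum1_card.
have H4 : \sum_(v in S') (lam v \in [:: 1; 2] : nat) <= 2.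
  rewrite (_ : \sum_(v in S') _ = \sum_(v | (v \in S') && (lam v \in [:: 1; 2])) 1); last first.
    rewrite [RHS]big_mkcond [LHS]big_mkcond; apply: eq_bigr => v _.
    by case: (v \in S'); case: (lam v \in [:: 1; 2]).
  rewrite sum1dep_card -[X in _ <= X]card_bool.
  apply: (@leq_card_in _ _ (fun v => lam v == 1)) => x y; rewrite !inE.
  case/andP => xS Hx /andP [yS Hy] Hxy; apply: inj => //.
  move: Hx Hy Hxy.
  by case/orP => /eqP -> /orP [] /eqP ->.
have := leq_mul (leqnn (n - 2)) H4.
lia.
Qed.

End Crown.

Theorem proposition3p2 (n : nat) : 3 <= n ->
  exists (S : {set crown_vertex n}) (lam : crown_vertex n -> nat),
    optimal_ext_irr_dom (@crown_adj n) S lam.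
Proof.
move=> n3.
have h0 : 0 < n by lia.
have h1 : 1 < n by lia.
pose k0 : 'I_n := Ordinal h0.
pose j0 : 'I_n := Ordinal h1.
have kj : k0 != j0 by [].
have jk : j0 != k0 by [].
pose S : {set crown_vertex n} :=
  [set x in [:: inl k0; inr k0; inr j0; inl j0]].
pose lam (v : crown_vertex n) : nat :=
  match v with inl i => if i == k0 then 0 else 3
             | inr i => if i == k0 then 1 else 2 end.
exists S, lam; split; last first.
  move=> S' lam' H; apply: leq_trans (lower n3 H).
  by rewrite cardsE (leq_trans (card_size _)).
split.
- move=> x y; rewrite !inE.
  by case/or4P => /eqP -> /or4P [] /eqP -> //=; rewrite ?eqxx ?(negbTE kj) ?(negbTE jk).
- by exists (inl k0); rewrite ?inE ?eqxx //= eqxx.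
- case=> i.
  + case: (i =P k0) => [->|/eqP ik].
      exists (inl k0); first by rewrite !inE eqxx.
      by apply/(dist_cd n3) => /=; rewrite ?eqxx ?(negbTE ik) ?(negbTE ij) ?(negbTE jk).
    exists (inr k0); first by rewrite !inE eqxx !orbT.
    by apply/(dist_cd n3) => /=; rewrite ?eqxx ?(negbTE ik) ?(negbTE ij) ?(negbTE jk).
  + case: (i =P j0) => [->|/eqP ij].
      exists (inl j0); first by rewrite !inE eqxx !orbT.
      by apply/(dist_cd n3) => /=; rewrite ?eqxx ?(negbTE ik) ?(negbTE ij) ?(negbTE jk).
    exists (inr j0); first by rewrite !inE eqxx !orbT.
    by apply/(dist_cd n3) => /=; rewrite ?eqxx ?(negbTE ik) ?(negbTE ij) ?(negbTE jk).
Qed.
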